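(* Let $t\geq 1$ and let $C=\{a_1,\ldots,a_m\}$ be a fan grounded by a curve $\gamma=\gamma_1\cup\cdots\cup\gamma_m$. If each $a_i$ intersects $\gamma$ in at most $t$ points, then there is a subfan $C'=\{a_{i_1},\ldots,a_{i_r}\}\subseteq C$ with $i_1<\cdots<i_r$ and $r=\lfloor\log_{t+1}\log_{t+1}m\rfloor$ that is well-grounded by a subcurve $\gamma'=\gamma'_1\cup\cdots\cup\gamma'_r\subseteq\gamma$, with $\gamma'_j\supseteq\gamma_{i_j}$ for $1\leq j\leq r$.
   Context: All curves are simple; no two curves are tangent (a shared interior point is a proper crossing). A fan with apex $v$ is a collection of curves with common endpoint $v$. Let $\gamma$ be a curve with endpoints $p,q$, partitioned into subcurves $\gamma_1,\ldots,\gamma_m$ appearing in this order along $\gamma$ from $p$ to $q$ (consecutive pieces sharing an endpoint). A fan $C=\{a_1,\ldots,a_m\}$ with apex $v$ is grounded by $\gamma_1\cup\cdots\cup\gamma_m$ if $v\notin\gamma$ and each $a_i$ has its other endpoint on $\gamma_i$. It is well-grounded by $\gamma_1\cup\cdots\cup\gamma_m$ if in addition each $a_i$ intersects $\gamma$ only within $\gamma_i$. *)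

(* Defs.v *)
From Stdlib Require Import Reals Lra Lia ZArith List.
Open Scope R_scope.

Definition point : Type := (R * R)%type.

Definition dist2 (p q : point) : R :=
  sqrt ((fst p - fst q) ^ 2 + (snd p - snd q) ^ 2).

(* A curve is given by a parametrization on [0,1]. *)
Definition continuous_on01 (f : R -> point) : Prop :=
  forall x, 0 <= x <= 1 -> forall eps, 0 < eps ->
    exists delta, 0 < delta /\
      forall y, 0 <= y <= 1 -> Rabs (y - x) < delta -> dist2 (f y) (f x) < eps.

Definition simple_curve (f : R -> point) : Prop :=
  continuous_on01 f /\
  (forall x y, 0 <= x <= 1 -> 0 <= y <= 1 -> f x = f y -> x = y).

Definition image_on (f : R -> point) (a b : R) (p : point) : Prop :=
  exists s, a <= s <= b /\ f s = p.

Definition curve_pts (f : R -> point) (p : point) : Prop := image_on f 0 1 p.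

Definition meets_at_most (t : nat) (f g : R -> point) : Prop :=
  exists l : list point, (length l <= t)%nat /\
    forall p, curve_pts f p -> curve_pts g p -> In p l.

(* Subcurves of g: piece i (1 <= i <= m) is g([s (i-1), s i]);
   the whole subcurve is g([s 0, s m]). *)
Definition piece (g : R -> point) (s : nat -> R) (i : nat) : point -> Prop :=
  image_on g (s (i - 1)%nat) (s i).

Definition sub_partition (s : nat -> R) (m : nat) : Prop :=
  0 <= s O /\ s m <= 1 /\ forall i, (1 <= i <= m)%nat -> s (i - 1)%nat < s i.

Definition full_partition (s : nat -> R) (m : nat) : Prop :=
  s O = 0 /\ s m = 1 /\ forall i, (1 <= i <= m)%nat -> s (i - 1)%nat < s i.

Definition is_fan (v : point) (a : nat -> R -> point) (m : nat) : Prop :=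
  forall i, (1 <= i <= m)%nat -> simple_curve (a i) /\ (a i 0 = v \/ a i 1 = v).

Definition grounded (v : point) (a : nat -> R -> point)
    (g : R -> point) (s : nat -> R) (m : nat) : Prop :=
  ~ image_on g (s O) (s m) v /\
  forall i, (1 <= i <= m)%nat ->
    (a i 0 = v /\ piece g s i (a i 1)) \/ (a i 1 = v /\ piece g s i (a i 0)).

Definition well_grounded (v : point) (a : nat -> R -> point)
    (g : R -> point) (s : nat -> R) (m : nat) : Prop :=
  grounded v a g s m /\
  forall i, (1 <= i <= m)%nat -> forall p,
    curve_pts (a i) p -> image_on g (s O) (s m) p -> piece g s i p.

Definition logb (b x : R) : R := ln x / ln b.

(* Main.v *)
Require Import Defs.
From Stdlib Require Import Reals ZArith List Lra Lia Classical.
Open Scope R_scope.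

Lemma exp_le_mono x y : x <= y -> exp x <= exp y.
Proof. intros [H|H]. left; apply exp_increasing; auto. subst; lra. Qed.

Lemma ln_nonpos x : ~ 0 < x -> ln x = 0.
Proof. intros H. unfold ln. destruct (Rlt_dec 0 x); tauto. Qed.

Lemma aux_lin (t r : nat) : (1 <= t)%nat -> (1 <= r)%nat -> (r*(t+1) <= (t+1)^r)%nat.
Proof.
  intros ht. induction r as [|r IH]; intros hr; [lia|].
  destruct (Nat.eq_dec r 0) as [->|hr0]; [simpl; lia|].
  assert (h1 : (t+1 <= (t+1)^r)%nat).
  { rewrite <- (Nat.pow_1_r (t+1)) at 1. apply Nat.pow_le_mono_r; lia. }
  specialize (IH ltac:(lia)). rewrite Nat.pow_succ_r'. nia.
Qed.

Lemma natpow (t r : nat) : (1 <= t)%nat -> (1 <= r)%nat -> (r^(t+1) <= (t+1)^((t+1)^r))%nat.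
Proof.
  intros ht hr.
  assert (h1 : (r <= (t+1)^r)%nat).
  { assert (r < 2^r)%nat by (apply Nat.pow_gt_lin_r; lia).
    assert (2^r <= (t+1)^r)%nat by (apply Nat.pow_le_mono_l; lia). lia. }
  apply Nat.le_trans with (((t+1)^r)^(t+1))%nat.
  - apply Nat.pow_le_mono_l; auto.
  - rewrite <- Nat.pow_mul_r. apply Nat.pow_le_mono_r; [lia|].
    pose proof (aux_lin t r ht hr); lia.
Qed.

Lemma num_bound (t m r : nat) (ht : (1 <= t)%nat) (hr1 : (1 <= r)%nat)
  (hr : Z.of_nat r = Int_part (logb (INR (t + 1)) (logb (INR (t + 1)) (INR m)))) :
  (r^(t+1) <= m)%nat.
Proof.
  set (b := INR (t+1)) in *.
  assert (hb : 2 <= b) by (unfold b; replace 2 with (INR 2) by (simpl; lra); apply le_INR; lia).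
  assert (lb : 0 < ln b) by (rewrite <- ln_1; apply ln_increasing; lra).
  assert (hx : INR r <= logb b (logb b (INR m))).
  { rewrite INR_IZR_INZ, hr. apply base_Int_part. }
  assert (hr1' : 1 <= INR r) by (replace 1 with (INR 1) by (simpl; lra); apply le_INR; lia).
  unfold logb in hx. set (y := ln (INR m) / ln b) in *.
  destruct (Rlt_dec 0 y) as [hy|hy].
  2:{ rewrite ln_nonpos in hx by auto. unfold Rdiv in hx. rewrite Rmult_0_l in hx. lra. }
  assert (h2 : INR r * ln b <= ln y).
  { replace (ln y) with ((ln y / ln b) * ln b) by (field; lra). nra. }
  assert (h3 : b ^ r <= y).
  { rewrite <- (exp_ln y) by auto. rewrite <- (exp_ln (b^r)) by (apply pow_lt; lra).
    apply exp_le_mono. rewrite ln_pow by lra. lra. }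
  assert (hbr : 0 < b ^ r) by (apply pow_lt; lra).
  assert (hm : 0 < INR m).
  { destruct (Rlt_dec 0 (INR m)) as [h|h]; auto.
    unfold y in hy. rewrite ln_nonpos in hy by auto. unfold Rdiv in hy. lra. }
  assert (h4 : b ^ r * ln b <= ln (INR m)).
  { replace (ln (INR m)) with (y * ln b) by (unfold y; field; lra). nra. }
  assert (h5 : INR ((t+1)^((t+1)^r)) <= INR m).
  { rewrite pow_INR. fold b. rewrite <- Rpower_pow by lra. unfold Rpower.
    rewrite <- (exp_ln (INR m)) by auto. apply exp_le_mono.
    rewrite pow_INR. fold b. lra. }
  apply INR_le in h5. pose proof (natpow t r ht hr1). lia.
Qed.

Definition inblk (r k q n : nat) : Prop := (q * r^k <= n < (q+1) * r^k)%nat.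
Definition blk (sp : nat -> R) (r k q : nat) (y : R) : Prop :=
  sp (q * r^k)%nat <= y <= sp ((q+1) * r^k)%nat.
Definition bad (a : nat -> R -> point) (g : R -> point) (sp : nat -> R) (r n k : nat) : Prop :=
  exists qk qk1 y, inblk r k qk n /\ inblk r (k-1) qk1 n /\ 0 <= y <= 1 /\
    blk sp r k qk y /\ ~ blk sp r (k-1) qk1 y /\ curve_pts (a (S n)) (g y).
Definition success a g sp (r m L q : nat) : Prop :=
  (1 <= L)%nat /\ ((q+1) * r^L <= m)%nat /\
  forall c, (c < r)%nat -> exists n, inblk r (L-1) (q*r+c) n /\ ~ bad a g sp r n L.

Lemma descent a g sp r m : forall k q, ((q+1)*r^k <= m)%nat ->
  (exists L q', success a g sp r m L q') \/
  (exists n, inblk r k q n /\ forall j, (1<=j<=k)%nat -> bad a g sp r n j).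
Proof.
  induction k as [|k IHk]; intros q hq.
  - right. exists q. split; [unfold inblk; simpl; lia | intros; lia].
  - destruct (classic (forall c, (c<r)%nat -> exists n, inblk r k (q*r+c) n /\ ~ bad a g sp r n (S k))) as [H|H].
    + left. exists (S k), q. split; [lia|split; auto]. intros c hc.
      replace (S k - 1)%nat with k by lia. auto.
    + apply not_all_ex_not in H. destruct H as [c Hc]. apply imply_to_and in Hc.
      destruct Hc as [hc Hc].
      assert (hq' : ((q*r+c+1)*r^k <= m)%nat).
      { rewrite Nat.pow_succ_r' in hq. nia. }
      destruct (IHk (q*r+c)%nat hq') as [HL|[n [hn hb]]]; [left; auto|].
      right. exists n. split.
      * unfold inblk in *. rewrite Nat.pow_succ_r'. nia.
      * intros j hj. destruct (Nat.eq_dec j (S k)) as [->|hjk].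
        -- apply NNPP. intro nb. apply Hc. exists n. auto.
        -- apply hb. lia.
Qed.

Lemma le_of_inblk P a b n : (a * P <= n < (b+1) * P)%nat -> (a <= b)%nat.
Proof.
  intros [h1 h2]. destruct (Nat.le_gt_cases a b) as [h|h]; auto.
  assert ((b+1)*P <= a*P)%nat by (apply Nat.mul_le_mono_r; lia). lia.
Qed.

Lemma block_unique r k q1 q2 n : inblk r k q1 n -> inblk r k q2 n -> q1 = q2.
Proof.
  unfold inblk; intros h1 h2.
  assert (q1 <= q2)%nat by (apply (le_of_inblk (r^k) q1 q2 n); lia).
  assert (q2 <= q1)%nat by (apply (le_of_inblk (r^k) q2 q1 n); lia). lia.
Qed.

Lemma nest r k qk qk1 n : inblk r (S k) qk n -> inblk r k qk1 n ->
  (qk * r^(S k) <= qk1 * r^k /\ (qk1+1) * r^k <= (qk+1)*r^(S k))%nat.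
Proof.
  unfold inblk. rewrite Nat.pow_succ_r'. set (P := (r^k)%nat). intros h1 h2.
  assert (qk * r <= qk1)%nat by (apply (le_of_inblk P (qk*r) qk1 n); nia).
  assert (qk1 <= qk * r + (r - 1))%nat.
  { apply (le_of_inblk P qk1 (qk*r + (r-1)) n). split; [lia|].
    destruct r; [simpl in *; lia|]. replace (qk * S r + (S r - 1) + 1)%nat with ((qk+1) * S r)%nat by lia. nia. }
  split; [nia|]. destruct r; [simpl in *; lia|]. nia.
Qed.

Lemma count_list a g sp r n
  (mono : forall i j, (i <= j)%nat -> sp i <= sp j)
  (ginj : forall x y, 0 <= x <= 1 -> 0 <= y <= 1 -> g x = g y -> x = y) :
  forall k, (forall j, (1<=j<=k)%nat -> bad a g sp r n j) ->
  exists L, length L = k /\ NoDup L /\ forall p, In p L -> exists y, p = g y /\ 0 <= y <= 1 /\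
     curve_pts (a (S n)) (g y) /\ forall q, inblk r k q n -> blk sp r k q y.
Proof.
  induction k as [|k IHk]; intros hb.
  - exists nil. split; [reflexivity|]. split; [constructor|]. intros p [].
  - destruct IHk as [L [hl [hnd hin]]]. { intros j hj; apply hb; lia. }
    destruct (hb (S k) ltac:(lia)) as [qk [qk1 [y [h1 [h2 [hy [h3 [h4 h5]]]]]]]].
    replace (S k - 1)%nat with k in * by lia.
    exists (g y :: L). split; [simpl; lia|]. split.
    + constructor; auto. intro hi. destruct (hin _ hi) as [y' [e [hy' [_ hb']]]].
      apply ginj in e; auto. subst y'. apply h4. apply hb'; auto.
    + intros p [<-|hi].
      * exists y. split; [reflexivity|]. split; [auto|]. split; [auto|]. intros q hq. rewrite (block_unique _ _ _ _ _ hq h1). auto.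
      * destruct (hin _ hi) as [y' [e [hy' [hc hb']]]]. exists y'. split; [auto|]. split; [auto|]. split; [auto|].
        intros q hq. rewrite (block_unique _ _ _ _ _ hq h1).
        destruct (nest _ _ _ _ _ h1 h2) as [n1 n2]. specialize (hb' qk1 h2).
        unfold blk in *. pose proof (mono _ _ n1). pose proof (mono _ _ n2). lra.
Qed.

Lemma fin_choice (P : nat -> nat -> Prop) n :
  (forall c, (c < n)%nat -> exists x, P c x) -> exists f, forall c, (c < n)%nat -> P c (f c).
Proof.
  induction n as [|n IH]; intros H.
  - exists (fun _ => O). intros; lia.
  - destruct IH as [f hf]. { intros c hc; apply H; lia. }
    destruct (H n ltac:(lia)) as [x hx].
    exists (fun c => if Nat.eqb c n then x else f c). intros c hc.
    destruct (Nat.eqb_spec c n); [subst; auto|]. apply hf; lia.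
Qed.

Theorem mainTheorem6
  (t m : nat) (ht : (1 <= t)%nat)
  (v : point) (a : nat -> R -> point) (g : R -> point) (s : nat -> R)
  (hg : simple_curve g)
  (hs : full_partition s m)
  (hfan : is_fan v a m)
  (hgr : grounded v a g s m)
  (hmeet : forall i, (1 <= i <= m)%nat -> meets_at_most t (a i) g)
  (r : nat)
  (hr : Z.of_nat r =
        Int_part (logb (INR (t + 1)) (logb (INR (t + 1)) (INR m)))) :
  exists (idx : nat -> nat) (u : nat -> R),
    (forall j, (1 <= j <= r)%nat -> (1 <= idx j <= m)%nat) /\
    (forall j, (1 <= j < r)%nat -> (idx j < idx (S j))%nat) /\
    sub_partition u r /\
    (forall j, (1 <= j <= r)%nat ->
       forall p, piece g s (idx j) p -> piece g u j p) /\
    well_grounded v (fun j => a (idx j)) g u r.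
Proof.
  destruct hs as [hs0 [hsm hsinc]].
  destruct hgr as [hv hgr].
  rewrite hs0, hsm in hv.
  assert (hvsub : forall x y, 0 <= x -> y <= 1 -> ~ image_on g x y v).
  { intros x y hx hy [z [hz ez]]. apply hv. exists z. split; [lra|auto]. }
  destruct (Nat.eq_dec r 0) as [->|hr0].
  { exists (fun _ => 1%nat), (fun _ => 0). split; [intros; lia|]. split; [intros; lia|].
    split. { unfold sub_partition. split; [lra|]. split; [lra|]. intros; lia. }
    split; [intros; lia|]. split; [|intros; lia]. split; [apply hvsub; lra|intros; lia]. }
  assert (hrm : (r^(t+1) <= m)%nat) by (apply (num_bound t m r); auto; lia).
  assert (smono : forall i j, (i <= j <= m)%nat -> s i <= s j).
  { intros i j. induction j as [|j IH]; intros hij.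
    - replace i with O by lia. lra.
    - destruct (Nat.eq_dec i (S j)) as [->|hne]; [lra|].
      pose proof (hsinc (S j) ltac:(lia)). replace (S j - 1)%nat with j in H by lia.
      specialize (IH ltac:(lia)). lra. }
  assert (sstrict : forall i j, (i < j <= m)%nat -> s i < s j).
  { intros i j hij. pose proof (hsinc j ltac:(lia)).
    pose proof (smono i (j-1)%nat ltac:(lia)). lra. }
  set (sp := fun i => s (Nat.min i m)).
  assert (spmono : forall i j, (i <= j)%nat -> sp i <= sp j).
  { intros i j hij. unfold sp. apply smono. lia. }
  assert (spe : forall i, (i <= m)%nat -> sp i = s i).
  { intros i hi. unfold sp. rewrite Nat.min_l; auto. }
  assert (ginj : forall x y, 0 <= x <= 1 -> 0 <= y <= 1 -> g x = g y -> x = y).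
  { destruct hg as [_ hg]. auto. }
  destruct (descent a g sp r m (t+1) 0 ltac:(lia)) as [[L [q [hL [hqm hsucc]]]]|[n [hn hbad]]].
  2:{ exfalso. unfold inblk in hn.
      destruct (count_list a g sp r n spmono ginj (t+1) hbad) as [Ls [hl [hnd hin]]].
      destruct (hmeet (S n) ltac:(lia)) as [l [hll hl2]].
      assert (incl Ls l).
      { intros p hp. destruct (hin p hp) as [y [-> [hy [hc _]]]]. apply hl2; auto.
        exists y. split; auto. }
      pose proof (NoDup_incl_length hnd H). lia. }
  destruct L as [|L']; [lia|]. replace (S L' - 1)%nat with L' in hsucc by lia.
  destruct (fin_choice _ r hsucc) as [f hf].
  rewrite Nat.pow_succ_r' in hqm.
  assert (hP : (1 <= r^L')%nat).
  { assert (r^L' <> 0)%nat by (apply Nat.pow_nonzero; lia). lia. }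
  set (P := (r^L')%nat) in *.
  assert (hfb : forall c, (c < r)%nat -> ((q*r+c)*P <= f c < (q*r+c+1)*P)%nat).
  { intros c hc. destruct (hf c hc) as [h _]. unfold inblk in h. exact h. }
  assert (F2 : forall j, (j <= r)%nat -> ((q*r+j)*P <= m)%nat).
  { intros j hj. nia. }
  set (u := fun j => sp ((q*r + j) * P)%nat).
  set (idx := fun j => S (f (j-1)%nat)).
  assert (h1 : forall j, (1 <= j <= r)%nat -> (1 <= idx j <= m)%nat).
  { intros j hj. unfold idx. pose proof (hfb (j-1)%nat ltac:(lia)).
    assert ((q*r + (j-1) + 1)*P <= m)%nat by (apply (Nat.le_trans _ ((q*r+j)*P)); [nia|apply F2; lia]).
    lia. }
  assert (hpiece : forall j, (1 <= j <= r)%nat -> forall p, piece g s (idx j) p -> piece g u j p).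
  { intros j hj p [z [hz ez]]. exists z. split; [|auto].
    unfold idx in hz. replace (S (f (j-1)%nat) - 1)%nat with (f (j-1)%nat) in hz by lia.
    pose proof (hfb (j-1)%nat ltac:(lia)). pose proof (h1 j hj). unfold idx in H0.
    unfold u. replace (j-1)%nat with (j-1)%nat by reflexivity.
    assert (e1 : sp ((q * r + (j - 1)) * P)%nat <= s (f (j-1)%nat)).
    { rewrite <- (spe (f (j-1)%nat)) by lia. apply spmono. lia. }
    assert (e2 : s (S (f (j-1)%nat)) <= sp ((q * r + j) * P)%nat).
    { rewrite <- (spe (S (f (j-1)%nat))) by lia. apply spmono.
      replace j with (j-1+1)%nat at 2 by lia. nia. }
    lra. }
  exists idx, u. split; [exact h1|]. split.
  { intros j hj. unfold idx. replace (S j - 1)%nat with j by lia.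
    pose proof (hfb (j-1)%nat ltac:(lia)). pose proof (hfb j ltac:(lia)).
    replace (q*r + (j-1) + 1)%nat with (q*r+j)%nat in H by lia. lia. }
  assert (u0 : 0 <= u O).
  { unfold u. rewrite <- hs0. rewrite <- (spe O) by lia. apply spmono. lia. }
  assert (ur : u r <= 1).
  { unfold u. rewrite <- hsm. rewrite <- (spe m) by lia. apply spmono. apply F2. lia. }
  split.
  { split; [auto|]. split; [auto|]. intros i hi. unfold u.
    rewrite !spe by (apply F2; lia). apply sstrict. split; [|apply F2; lia].
    assert ((q * r + (i - 1)) * P < (q*r+(i-1)) * P + P)%nat by lia.
    replace (q*r+i)%nat with (q*r+(i-1)+1)%nat by lia. nia. }
  split; [exact hpiece|].
  split.
  { split; [apply hvsub; auto|]. intros i hi. destruct (hgr (idx i) (h1 i hi)) as [[e p]|[e p]].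
    - left. split; auto.
    - right. split; auto. }
  intros j hj p hp [y [hy ey]]. subst p.
  destruct (classic (blk sp r L' (q*r + (j-1)) y)) as [hb|hb].
  { exists y. split; [|auto]. unfold u, blk in *.
    replace (q*r + (j-1) + 1)%nat with (q*r+j)%nat in hb by lia. exact hb. }
  exfalso. destruct (hf (j-1)%nat ltac:(lia)) as [hin hnb]. apply hnb.
  exists q, (q*r + (j-1))%nat, y.
  pose proof (hfb (j-1)%nat ltac:(lia)).
  split. { unfold inblk. rewrite Nat.pow_succ_r'. fold P. nia. }
  split. { replace (S L' - 1)%nat with L' by lia. exact hin. }
  split. { lra. }
  split. { unfold blk. rewrite Nat.pow_succ_r'. fold P. unfold u in hy.
    replace (q * (r*P))%nat with ((q*r+0)*P)%nat by lia.
    replace ((q+1) * (r*P))%nat with ((q*r+r)*P)%nat by lia. exact hy. }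
  split. { replace (S L' - 1)%nat with L' by lia. exact hb. }
  exact hp.
Qed.
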